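(* Let $\Delta>\delta\geq 0$ be integers and let $\delta^*$ be a maximizer of $\frac{\Delta(\Delta-i)i}{\Delta+i}$ over $i\in\{\delta,\delta+1,\ldots,\Delta\}$. Let $G$ be a graph with $n$ vertices, maximum degree at most $\Delta$, and minimum degree at least $\delta$. Then $$irr(G)\leq \frac{\Delta(\Delta-\delta^* )\delta^*}{\Delta+\delta^*}\,n.$$
   Context: All graphs are finite, simple and undirected. For a graph $G$ with edge set $E(G)$ and vertex degrees $d_G(u)$, the irregularity (in the sense of Albertson) is $irr(G)=\sum_{uv\in E(G)}|d_G(u)-d_G(v)|$. *)

(* Defs.v *)
From mathcomp Require Import all_boot all_order all_algebra.
Set Implicit Arguments. Unset Strict Implicit. Unset Printing Implicit Defensive.
Import Order.TTheory GRing.Theory Num.Theory.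
Local Open Scope ring_scope.

Definition simple_graph (T : finType) (e : rel T) : Prop :=
  symmetric e /\ irreflexive e.

Definition deg (T : finType) (e : rel T) (u : T) : nat := #|[set v | e u v]|.

(* Albertson irregularity: sum over edges uv (each unordered edge counted once,
   via the order u before v in the enumeration of T) of |d(u) - d(v)|. *)
Definition irr (T : finType) (e : rel T) : rat :=
  \sum_(u : T) \sum_(v : T | e u v && (enum_rank u < enum_rank v)%N)
     `| (deg e u)%:R - (deg e v)%:R | .

Definition irrf (Delta i : nat) : rat :=
  (Delta%:R * (Delta%:R - i%:R) * i%:R) / (Delta%:R + i%:R).

(* Main.v *)
Require Import Defs.
From mathcomp Require Import all_boot all_order all_algebra.
From mathcomp Require Import ring lra.
Import Order.TTheory GRing.Theory Num.Theory.
Local Open Scope ring_scope.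
Lemma ineq1 (a b D : rat) : 0 <= a -> a <= b -> b <= D -> 0 < a + b -> 0 < D + a ->
  a * (`|a - b| * b / (a + b)) <= D * (D - a) * a / (D + a).
Proof.
move=> a0 ab bD ab0 Da0.
have -> : `|a - b| = b - a by rewrite distrC ger0_norm ?subr_ge0.
rewrite mulrA ler_pdivrMr // mulrAC ler_pdivlMr //.
have h : 0 <= (D - b) * ((a+b)*D + a*(b-a)) by apply: mulr_ge0; nra.
nra.
Qed.
Lemma ineq2 (a b D : rat) : 0 <= b -> b <= a -> a <= D -> 0 < a + b -> 0 < D + b ->
  a * (`|a - b| * b / (a + b)) <= D * (D - b) * b / (D + b).
Proof.
move=> a0 ab bD ab0 Da0.
have -> : `|a - b| = a - b by rewrite ger0_norm ?subr_ge0.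
rewrite mulrA ler_pdivrMr // mulrAC ler_pdivlMr //.
have h1 : 0 <= (D - a) by lra.
have h2 : 0 <= a - b by lra.
have h3 : 0 <= b * (D - a) * (a - b) by apply: mulr_ge0 => //; apply: mulr_ge0.
have h4 : 0 <= b * b * (D - a) by apply: mulr_ge0 => //; apply: mulr_ge0.
nra.
Qed.

Theorem proposition1 (Delta delta dstar : nat) (T : finType) (e : rel T) :
  (delta < Delta)%N ->
  (delta <= dstar <= Delta)%N ->
  (forall i : nat, (delta <= i <= Delta)%N -> irrf Delta i <= irrf Delta dstar) ->
  simple_graph e ->
  (forall u : T, (deg e u <= Delta)%N) ->
  (forall u : T, (delta <= deg e u)%N) ->
  irr e <= irrf Delta dstar * (#|T|)%:R.
Proof.
move=> hdD hds hmax [esym eirr] hDu hdu.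
set M := irrf Delta dstar.
have M0 : 0 <= M.
  have h0 : irrf Delta Delta = 0 by rewrite /irrf subrr mulr0 !mul0r.
  by rewrite -h0; apply: hmax; rewrite (ltnW hdD) leqnn.
pose d u : rat := (deg e u)%:R.
pose w u v := `|d u - d v| * d v / (d u + d v).
have hw : forall u v, `|d u - d v| = w u v + w v u.
  move=> u v; rewrite /w (distrC (d v)) [d v + d u]addrC -mulrDl -mulrDr [d v + _]addrC.
  have [e0|nz] := eqVneq (d u + d v) 0; last by rewrite mulfK.
  have := paddr_eq0 (ler0n _ (deg e u)) (ler0n _ (deg e v)).
  rewrite -/(d u) -/(d v) => h; have /andP[/eqP du0 /eqP dv0] : (d u == 0) && (d v == 0) by rewrite -h e0.
  by rewrite du0 dv0 subrr normr0 !mul0r.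
pose r (u : T) : nat := nat_of_ord (enum_rank u).
have rne : forall u v, e u v -> r v != r u.
  move=> u v huv; rewrite /r (inj_eq val_inj) (inj_eq enum_rank_inj).
  by apply: contraTneq huv => ->; rewrite eirr.
have step1 : irr e = \sum_u \sum_(v | e u v) w u v.
  rewrite /irr.
  under eq_bigr => u _ do under eq_bigr => v _ do rewrite hw.
  under eq_bigr do rewrite big_split.
  rewrite big_split /=.
  have -> : \sum_u \sum_(v | e u v) w u v = \sum_u \sum_(v | e u v && (r u < r v)%N) w u v
        + \sum_u \sum_(v | e u v && (r v < r u)%N) w u v.
    rewrite -big_split; apply: eq_bigr => u _; rewrite (bigID (fun v => (r u < r v)%N)) /=.
    congr (_ + _); apply: eq_bigl => v.
    case he: (e u v) => //=.
    by rewrite -leqNgt ltn_neqAle rne.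
  congr (_ + _).
  under eq_bigr do rewrite big_mkcond.
  rewrite exchange_big; apply: eq_bigr => v _; rewrite [RHS]big_mkcond; apply: eq_bigr => u _.
  by rewrite (esym u v).
have key : forall u v, (0 < deg e u)%N -> d u * w u v <= M.
  move=> u v dpos.
  have a0 : 0 < d u by rewrite ltr0n.
  have b0 : 0 <= d v by rewrite ler0n.
  have ab0 : 0 < d u + d v by rewrite ltr_pwDl.
  have hD : forall x, (x <= Delta)%N -> 0 < Delta%:R + x%:R :> rat.
    by move=> x _; rewrite -natrD ltr0n addn_gt0 (leq_ltn_trans _ hdD).
  rewrite /w.
  have [ab|ba] := leqP (deg e u) (deg e v).
    have ab' : d u <= d v by rewrite ler_nat.
    have bD : d v <= Delta%:R by rewrite ler_nat.
    have h1 := @ineq1 _ _ _ (ler0n _ (deg e u) : 0 <= d u) ab' bD ab0 (hD _ (hDu u)).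
    apply: le_trans h1 _; by apply: hmax; rewrite hdu hDu.
  have ba' : d v <= d u by rewrite ler_nat ltnW.
  have aD : d u <= Delta%:R by rewrite ler_nat.
  have h2 := @ineq2 _ _ _ (ler0n _ (deg e v) : 0 <= d v) ba' aD ab0 (hD _ (hDu v)).
  apply: le_trans h2 _; by apply: hmax; rewrite hdu hDu.
rewrite step1.
apply: le_trans (_ : \sum_(u : T) M <= _); last by rewrite sumr_const mulr_natr.
apply: ler_sum => u _.
have [d0|dpos] := posnP (deg e u).
  rewrite big_pred0 // => v; apply: negbTE; apply/negP => huv.
  have : v \in [set v | e u v] by rewrite inE.
  by rewrite (card0_eq d0).
apply: le_trans (_ : \sum_(v | e u v) M / d u <= _).
  apply: ler_sum => v _; rewrite ler_pdivlMr ?ltr0n // mulrC; exact: key.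
have -> : \sum_(v | e u v) M / d u = \sum_(v in [set v | e u v]) M / d u.
  by apply: eq_bigl => v; rewrite inE.
rewrite sumr_const -mulr_natr; change (M / d u * d u <= M); rewrite divfK // pnatr_eq0 -lt0n; last by [].
Qed.
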